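(* Let $c$ be an even integer greater than one and $\Gamma=\langle 2,c+1\rangle$ (the numerical semigroup generated by $2$ and $c+1$). For $m\in\Gamma$, \[ \delta^2_\Gamma(m)=\begin{cases}3 & \text{if } m=2,\\ 4 & \text{if } 2<m\le c+1.\end{cases} \]
   Context: For a numerical semigroup $\Gamma$: $D_\Gamma(x)=\{s\in\Gamma:x-s\in\Gamma\}$ and $\delta^2_\Gamma(m)=\min\{|D_\Gamma(m_1)\cup D_\Gamma(m_2)|: m\le m_1<m_2,\ m_1,m_2\in\Gamma\}$. *)

(* Defs.v *)
From mathcomp Require Import all_boot.
Set Implicit Arguments. Unset Strict Implicit. Unset Printing Implicit Defensive.

(* The coefficients are necessarily <= s when generators are positive; we bound
   them by s (this is exact for g1, g2 >= 1). *)
Definition in_sg2 (g1 g2 s : nat) : bool :=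
  [exists a : 'I_s.+1, exists b : 'I_s.+1, s == a * g1 + b * g2].

(* D_Gamma(x) = { s in Gamma : x - s in Gamma }, as a list (s ranges over 0..x,
   since x - s in Gamma forces s <= x in the integers). *)
Definition Dset (g1 g2 x : nat) : seq nat :=
  [seq s <- iota 0 x.+1 | in_sg2 g1 g2 s && in_sg2 g1 g2 (x - s)].

Definition card_union (g1 g2 m1 m2 : nat) : nat :=
  size (undup (Dset g1 g2 m1 ++ Dset g1 g2 m2)).

Definition delta2_is (g1 g2 m k : nat) : Prop :=
  (exists m1 m2, [/\ m <= m1, m1 < m2, in_sg2 g1 g2 m1, in_sg2 g1 g2 m2
                    & card_union g1 g2 m1 m2 = k]) /\
  (forall m1 m2, m <= m1 -> m1 < m2 -> in_sg2 g1 g2 m1 -> in_sg2 g1 g2 m2 ->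
                 k <= card_union g1 g2 m1 m2).

(* Main.v *)
Require Import Defs.
From mathcomp Require Import all_boot zify.

Lemma even_ex n : ~~ odd n -> n = n./2 * 2.
Proof. by move=> h; rewrite -[LHS]odd_double_half (negbTE h) add0n muln2. Qed.

Lemma odd_ex n : odd n -> n = n./2 * 2 + 1.
Proof. by move=> h; rewrite -[LHS]odd_double_half h muln2 addnC. Qed.

Lemma in_sgE c s : ~~ odd c -> in_sg2 2 c.+1 s = ~~ odd s || (c < s).
Proof.
move=> hc; have hc2 := @even_ex c hc; apply/idP/idP.
- case/existsP=> a /existsP [b /eqP ->].
  case: b => -[|b'] hb /=.
    by rewrite mul0n addn0 oddM /= andbF.
  apply/orP; right; lia.
- case: (boolP (odd s)) => h /= H; apply/existsP.
  + have hs := @odd_ex s h.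
    have ha : s./2 - c./2 < s.+1 by lia.
    have hb : 1 < s.+1 by lia.
    exists (Ordinal ha); apply/existsP; exists (Ordinal hb); apply/eqP => /=; lia.
  + have hs := @even_ex s h.
    have ha : s./2 < s.+1 by lia.
    exists (Ordinal ha); apply/existsP; exists ord0; apply/eqP => /=; lia.
Qed.

Lemma oddE m : odd m = (m %% 2 == 1).
Proof. by rewrite modn2; case: (odd m). Qed.

Lemma memD c x y : ~~ odd c -> (x \in Dset 2 c.+1 y) =
  [&& x <= y, ~~ odd x || (c < x) & ~~ odd (y - x) || (c < y - x)].
Proof. by move=> hc; rewrite /Dset mem_filter mem_iota !in_sgE // add0n ltnS andbC. Qed.

Lemma memU c x y z : ~~ odd c -> (x \in undup (Dset 2 c.+1 y ++ Dset 2 c.+1 z)) =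
  [&& x <= y, ~~ odd x || (c < x) & ~~ odd (y - x) || (c < y - x)] ||
  [&& x <= z, ~~ odd x || (c < x) & ~~ odd (z - x) || (c < z - x)].
Proof. by move=> hc; rewrite mem_undup mem_cat !memD. Qed.

Theorem lemma4p6 (c : nat) (hc_even : ~~ odd c) (hc : 1 < c) (m : nat)
  (hm : in_sg2 2 c.+1 m) :
  (m = 2 -> delta2_is 2 c.+1 m 3) /\
  (2 < m <= c.+1 -> delta2_is 2 c.+1 m 4).
Proof.
have hc2 := @even_ex c hc_even.
split.
- move=> -> {hm m}; split.
  + exists 2, 4; split => //; try by rewrite in_sgE.
    rewrite /card_union -(@perm_size _ [:: 0; 2; 4]) //.
    apply: uniq_perm; rewrite ?undup_uniq // => x.
    rewrite memU // !inE !oddE; apply/idP/idP; lia.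
  + move=> m1 m2 h1 h2; rewrite !in_sgE // !oddE => H1 H2.
    rewrite /card_union -[3]/(size [:: 0; m1; m2]).
    apply: uniq_leq_size; first by rewrite /= !inE; lia.
    move=> x; rewrite memU // !inE !oddE; lia.
- move=> hm2; split.
  + exists c.+1, c.+3; split => //; try lia; try (rewrite in_sgE //; apply/orP; right; lia).
    rewrite /card_union -(@perm_size _ [:: 0; 2; c.+1; c.+3]) //.
      apply: uniq_perm; [rewrite /= !inE; lia | exact: undup_uniq | move=> x].
    rewrite memU // !inE !oddE; apply/idP/idP; lia.
  + move=> m1 m2 h1 h2; rewrite !in_sgE // !oddE => H1 H2.
    rewrite /card_union -[4]/(size [:: 0; 2; m1; m2]).
    apply: uniq_leq_size; first by rewrite /= !inE; lia.
    move=> x; rewrite memU // !inE !oddE; lia.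
Qed.
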